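(* Let $A$ be the random matrix defined in the context, and consider parameters $r\le k$ and $D$ with $r\to\infty$, $D/r^2\to\infty$ and $(\log k)/D\to0$. Then with probability $1-o(1)$ over $A$ there exist $x,x^-\in\mathcal{S}_k$, each with at most $r$ nonzero entries, all nonzero entries at least $1/r$, and $\mathrm{supp}(x)\neq\mathrm{supp}(x^-)$, such that for every $m=o(r^2)$ the total variation distance between the distribution of $m$ i.i.d. samples from $\mathrm{cat}(Ax)$ and that of $m$ i.i.d. samples from $\mathrm{cat}(Ax^-)$ is $o(1)$. In particular no algorithm given a document of $o(r^2)$ words can distinguish $\mathrm{cat}(Ax)$ from $\mathrm{cat}(Ax^-)$ with success probability better than $1/2+o(1)$.
   Context: Random instance: let $S_1,\dots,S_k\subseteq[D]$ be independent uniformly random subsets of $[D]$ (each element included independently with probability $1/2$), and let $A\in\mathbb{R}^{D\times k}$ have $A_{ij}=1/|S_j|$ if $i\in S_j$ and $A_{ij}=0$ otherwise. $\mathcal{S}_k=\{z\in\mathbb{R}^k_{\ge0}:\sum_iz_i=1\}$. $\mathrm{cat}(p)$ denotes the categorical distribution on $[D]$ with probability vector $p$. *)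

(* Defs.v *)
From Stdlib Require Import Reals.
From mathcomp Require Import all_boot.
Set Implicit Arguments. Unset Strict Implicit. Unset Printing Implicit Defensive.
Local Open Scope R_scope.

Definition Omega (D k : nat) := {ffun 'I_k -> {set 'I_D}}.

(* Probability of an event under the uniform measure (each element in each
   S_j independently with prob. 1/2 <=> uniform on Omega). *)
Definition prob (D k : nat) (E : {set Omega D k}) : R :=
  INR #|E| / INR #|[set: Omega D k]|.

Definition Amat (D k : nat) (S : Omega D k) (i : 'I_D) (j : 'I_k) : R :=
  if i \in S j then / INR #|S j| else 0.

Definition Amul (D k : nat) (S : Omega D k) (x : 'I_k -> R) (i : 'I_D) : R :=
  \big[Rplus/0]_(j : 'I_k) (Amat S i j * x j).

Definition in_simplex (k : nat) (x : 'I_k -> R) : Prop :=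
  (forall j, 0 <= x j) /\ \big[Rplus/0]_(j : 'I_k) x j = 1.

Definition supp (k : nat) (x : 'I_k -> R) : {set 'I_k} :=
  [set j | if Req_EM_T (x j) 0 then false else true].

Definition r_sparse (k r : nat) (x : 'I_k -> R) : Prop :=
  (#|supp x| <= r)%N /\ (forall j, x j <> 0 -> / INR r <= x j).

(* Total variation distance between the laws of m i.i.d. samples from
   cat(p) and from cat(q), on [D]^m. *)
Definition tv_iid (D m : nat) (p q : 'I_D -> R) : R :=
  / 2 * \big[Rplus/0]_(s : {ffun 'I_m -> 'I_D})
          Rabs (\big[Rmult/1]_(t : 'I_m) p (s t) - \big[Rmult/1]_(t : 'I_m) q (s t)).

(* Main.v *)
Require Import Defs.
From HB Require Import structures.
From Stdlib Require Import Reals Lra Lia.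
From mathcomp Require Import all_boot.
Local Open Scope R_scope.
Set Implicit Arguments. Unset Strict Implicit.
HB.instance Definition _ := Monoid.isComLaw.Build R 0 Rplus (fun a b c => esym (Rplus_assoc a b c)) Rplus_comm Rplus_0_l.
HB.instance Definition _ := Monoid.isComLaw.Build R 1 Rmult (fun a b c => esym (Rmult_assoc a b c)) Rmult_comm Rmult_1_l.
HB.instance Definition _ := Monoid.isMulLaw.Build R 0 Rmult Rmult_0_l Rmult_0_r.
HB.instance Definition _ := Monoid.isAddLaw.Build R Rmult Rplus Rmult_plus_distr_r Rmult_plus_distr_l.
Lemma ptw P Q lam : 0 <= P -> (P = 0 -> Q = 0) -> 0 < lam ->
  Rabs (P - Q) <= (Q*Q*/P - 2*Q + P) / (2*lam) + lam * P / 2.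
Proof.
move=> hP hPQ hl.
destruct (Req_dec P 0) as [e|ne].
  rewrite (hPQ e) e Rinv_0; rewrite Rminus_0_r Rabs_R0. lra.
have hP' : 0 < P by lra.
set u := / P.
have hu : P * u = 1 by rewrite /u; field.
have hu0 : 0 < u by apply: Rinv_0_lt_compat.
have e1 : Q*Q*u - 2*Q + P = (P - Q)*(P-Q)*u.
  have -> : (P - Q)*(P-Q)*u = Q*Q*u - 2*Q*(P*u) + P*(P*u) by ring.
  rewrite hu; ring.
rewrite e1.
set d := P - Q.
have key : 2*lam*Rabs d <= d*d*u + lam*lam*P.
  have : 0 <= u * (Rabs d - lam*P)*(Rabs d - lam*P) by rewrite Rmult_assoc; apply: Rmult_le_pos; [lra | exact: (Rle_0_sqr _)].
  have ha : Rabs d * Rabs d = d * d by rewrite -Rabs_mult Rabs_right; nra.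
  have -> : u * (Rabs d - lam*P)*(Rabs d - lam*P) = u*(Rabs d * Rabs d) - 2*lam*Rabs d*(P*u) + lam*lam*P*(P*u) by ring.
  rewrite hu ha; lra.
apply: (Rmult_le_reg_l (2*lam)); first lra.
have -> : 2 * lam * (d * d * u / (2 * lam) + lam * P / 2) = d*d*u + lam*lam*P by field; lra.
exact: key.
Qed.

Lemma sumR_le (I : finType) (F G : I -> R) : (forall i, F i <= G i) ->
  \big[Rplus/0]_(i : I) F i <= \big[Rplus/0]_(i : I) G i.
Proof. move=> h; apply: (big_ind2 (fun x y => x <= y)) => //; [lra | move=> *; lra]. Qed.

Lemma sumR_ge0 (I : finType) (P : pred I) (F : I -> R) : (forall i, 0 <= F i) ->
  0 <= \big[Rplus/0]_(i | P i) F i.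
Proof. move=> h; apply: (big_ind (fun x => 0 <= x)) => //; [lra | move=> *; lra]. Qed.

Lemma prodR_ge0 (I : finType) (F : I -> R) : (forall i, 0 <= F i) ->
  0 <= \big[Rmult/1]_(i : I) F i.
Proof. move=> h; apply: (big_ind (fun x => 0 <= x)) => //; [lra | move=> *; nra]. Qed.

Lemma prodR_inv (I : finType) (F : I -> R) :
  / (\big[Rmult/1]_(i : I) F i) = \big[Rmult/1]_(i : I) / F i.
Proof. exact: (big_morph Rinv Rinv_mult Rinv_1). Qed.

Lemma sum_prod D m (f : 'I_D -> R) :
  \big[Rplus/0]_(s : {ffun 'I_m -> 'I_D}) \big[Rmult/1]_(t : 'I_m) f (s t)
  = (\big[Rplus/0]_(i : 'I_D) f i) ^ m.
Proof.
rewrite -(bigA_distr_bigA (fun (_ : 'I_m) i => f i)) /=.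
elim: m => [|m IH]; first by rewrite big_ord0.
by rewrite big_ord_recr /= IH Rmult_comm.
Qed.

Lemma prod_zero D m (p q : 'I_D -> R) (s : {ffun 'I_m -> 'I_D}) :
  (forall i, p i = 0 -> q i = 0) ->
  \big[Rmult/1]_(t : 'I_m) p (s t) = 0 -> \big[Rmult/1]_(t : 'I_m) q (s t) = 0.
Proof.
move=> hpq.
case: (pickP (fun t => if Req_EM_T (p (s t)) 0 then true else false)) => [t|].
  case: Req_EM_T => // e _ _.
  by rewrite (bigD1 t) //= (hpq _ e) Rmult_0_l.
move=> h; have : \big[Rmult/1]_(t : 'I_m) p (s t) <> 0.
  apply: (big_ind (fun x => x <> 0)).
  - exact: R1_neq_R0.
  - by move=> x y; apply: Rmult_integral_contrapositive_currified.
  - by move=> t _; have := h t; case: Req_EM_T.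
by [].
Qed.

Lemma tv_bound D m (p q : 'I_D -> R) lam :
  (forall i, 0 <= p i) -> (forall i, 0 <= q i) ->
  \big[Rplus/0]_(i : 'I_D) p i = 1 -> \big[Rplus/0]_(i : 'I_D) q i = 1 ->
  (forall i, p i = 0 -> q i = 0) -> 0 < lam ->
  tv_iid m p q <= /2 * (((\big[Rplus/0]_(i : 'I_D) (q i * q i * / p i)) ^ m - 1) / (2*lam) + lam/2).
Proof.
move=> hp hq sp sq hpq hl.
rewrite /tv_iid; apply: Rmult_le_compat_l; first lra.
set a := / (2*lam).
apply: Rle_trans.
  apply: sumR_le => s.
  apply: (@ptw (\big[Rmult/1]_(t : 'I_m) p (s t)) (\big[Rmult/1]_(t : 'I_m) q (s t)) lam) => //.
    by apply: prodR_ge0.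
  exact: prod_zero.
have e : forall s : {ffun 'I_m -> 'I_D},
  (\big[Rmult/1]_(t : 'I_m) q (s t) * \big[Rmult/1]_(t : 'I_m) q (s t) *
      / (\big[Rmult/1]_(t : 'I_m) p (s t)) - 2 * \big[Rmult/1]_(t : 'I_m) q (s t) +
      \big[Rmult/1]_(t : 'I_m) p (s t)) / (2 * lam) +
   lam * \big[Rmult/1]_(t : 'I_m) p (s t) / 2
  = a * \big[Rmult/1]_(t : 'I_m) (q (s t) * q (s t) * / p (s t))
    + (-2 * a) * \big[Rmult/1]_(t : 'I_m) q (s t)
    + (a + lam/2) * \big[Rmult/1]_(t : 'I_m) p (s t).
  move=> s; rewrite prodR_inv !big_split /= /a.
  move: (\big[Rmult/1]_(i < m) q (s i)) (\big[Rmult/1]_(i < m) / p (s i)) (\big[Rmult/1]_(i < m) p (s i)) => X Y Z.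
  field; lra.
rewrite (eq_bigr _ (fun s _ => e s)) !big_split /= -!big_distrr /= !sum_prod sp sq !pow1.
rewrite (@sum_prod D m (fun i => q i * q i * / p i)) /a; apply: Req_le.
move: (\big[Rplus/0]_(i < D) (q i * q i * / p i)) => X. field; lra.
Qed.



Lemma sumR_leP (I : finType) (P : pred I) (F G : I -> R) : (forall i, P i -> F i <= G i) ->
  \big[Rplus/0]_(i | P i) F i <= \big[Rplus/0]_(i | P i) G i.
Proof. move=> h; apply: (big_ind2 (fun x y => x <= y)) => //; [lra | move=> *; lra]. Qed.

Lemma iter_plusR n c : iter n (Rplus c) 0 = INR n * c.
Proof. elim: n => [|n IH]; first by rewrite /=; lra. rewrite iterS IH S_INR; lra. Qed.

Lemma sum_constR (I : finType) (P : pred I) c :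
  \big[Rplus/0]_(i | P i) c = INR #|P| * c.
Proof. by rewrite big_const iter_plusR. Qed.

Lemma sum_lt k r c : (r <= k)%N ->
  \big[Rplus/0]_(j : 'I_k | (j < r)%N) c = INR r * c.
Proof.
move=> hrk; rewrite -(@big_ord_widen _ 0 Rplus r k (fun _ => c) hrk) big_const_ord iter_plusR; done.
Qed.

Lemma inv_INR_ge0 n : 0 <= / INR n.
Proof. case: n => [|n]; first by rewrite Rinv_0; lra.
apply: Rlt_le; apply: Rinv_0_lt_compat; apply: lt_0_INR; apply/ltP. done. Qed.

Definition xv (k r : nat) (j : 'I_k) : R := if (j < r)%N then / INR r else 0.
Definition qv (k r : nat) (j0 j : 'I_k) : R :=
  if (j < r)%N && (j != j0) then / (INR r - 1) else 0.
Arguments xv : clear implicits.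
Arguments qv : clear implicits.
Definition gval D k r (S : Omega D k) (j0 : 'I_k) : R :=
  \big[Rplus/0]_(i : 'I_D) (Amul S (qv k r j0) i * Amul S (qv k r j0) i * / Amul S (xv k r) i).

Lemma Amat_ge0 D k (S : Omega D k) i j : 0 <= Amat S i j.
Proof. rewrite /Amat; case: ifP => _; [exact: inv_INR_ge0 | lra]. Qed.

Lemma col_sum D k (S : Omega D k) j : (0 < #|S j|)%N ->
  \big[Rplus/0]_(i : 'I_D) Amat S i j = 1.
Proof.
move=> h; rewrite /Amat -big_mkcond /= sum_constR.
have -> : #|[pred i | i \in S j]| = #|S j| by apply: eq_card.
field; apply: not_0_INR; apply/eqP; rewrite -lt0n //.
Qed.

Definition ssum D k r (S : Omega D k) (i : 'I_D) : R :=
  \big[Rplus/0]_(j : 'I_k | (j < r)%N) Amat S i j.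

Lemma p_eq D k r (S : Omega D k) i : Amul S (xv k r) i = ssum r S i * / INR r.
Proof.
rewrite /Amul /ssum big_distrl /= [in RHS]big_mkcond /=; apply: eq_bigr => j _.
rewrite /xv; case: ifP => _; lra.
Qed.

Definition tsum D k r (S : Omega D k) (j0 : 'I_k) (i : 'I_D) : R :=
  \big[Rplus/0]_(j : 'I_k | (j < r)%N && (j != j0)) Amat S i j.

Lemma q_eq D k r (S : Omega D k) (j0 : 'I_k) i : Amul S (qv k r j0) i = tsum r S j0 i * / (INR r - 1).
Proof.
rewrite /Amul /tsum big_distrl /= [in RHS]big_mkcond /=; apply: eq_bigr => j _.
rewrite /qv; case: ifP => _; lra.
Qed.

Lemma s_split D k r (S : Omega D k) (j0 : 'I_k) i : (j0 < r)%N ->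
  ssum r S i = Amat S i j0 + tsum r S j0 i.
Proof. by move=> h; rewrite /ssum (bigD1 j0) //. Qed.

Lemma ssum_ge0 D k r (S : Omega D k) i : 0 <= ssum r S i.
Proof. apply: sumR_ge0 => j; exact: Amat_ge0. Qed.
Lemma tsum_ge0 D k r (S : Omega D k) (j0 : 'I_k) i : 0 <= tsum r S j0 i.
Proof. apply: sumR_ge0 => j; exact: Amat_ge0. Qed.

Definition goodS D k r (S : Omega D k) : bool :=
  [forall j : 'I_k, (j < r)%N ==> (D <= 3 * #|S j|)%N].

Lemma goodS_pos D k r (S : Omega D k) (j : 'I_k) : goodS r S -> (0 < D)%N -> (j < r)%N -> (0 < #|S j|)%N.
Proof.
move=> /forallP /(_ j) /implyP h hD hj; have := h hj.
case: #|S j| => //; rewrite muln0 leqn0 => /eqP e; by rewrite e in hD.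
Qed.

Lemma sum_ssum D k r (S : Omega D k) : (r <= k)%N -> (0 < D)%N -> goodS r S ->
  \big[Rplus/0]_(i : 'I_D) ssum r S i = INR r.
Proof.
move=> hrk hD hg; rewrite /ssum exchange_big /=.
rewrite (eq_bigr (fun _ => 1)) ?sum_lt //; first lra.
move=> j hj; apply: col_sum; exact: goodS_pos hg hD hj.
Qed.

Lemma sum_tsum D k r (S : Omega D k) (j0 : 'I_k) : (r <= k)%N -> (0 < D)%N -> goodS r S -> (j0 < r)%N ->
  \big[Rplus/0]_(i : 'I_D) tsum r S j0 i = INR r - 1.
Proof.
move=> hrk hD hg hj0.
have e : forall i, tsum r S j0 i = ssum r S i - Amat S i j0.
  move=> i; rewrite (s_split S i hj0); lra.
rewrite (eq_bigr _ (fun i _ => e i)).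
have -> : \big[Rplus/0]_(i : 'I_D) (ssum r S i - Amat S i j0) =
   \big[Rplus/0]_(i : 'I_D) ssum r S i + \big[Rplus/0]_(i : 'I_D) (-1 * Amat S i j0).
  by rewrite -big_split /=; apply: eq_bigr => i _; lra.
rewrite -big_distrr /= sum_ssum // col_sum; first lra.
exact: goodS_pos hg hD hj0.
Qed.

Lemma Amat_le D k r (S : Omega D k) i (j : 'I_k) : (0 < D)%N -> goodS r S -> (j < r)%N ->
  Amat S i j <= 3 / INR D.
Proof.
move=> hD /forallP /(_ j) /implyP h hj; have := h hj => hle.
rewrite /Amat; case: ifP => _; last first.
  apply: Rlt_le; apply: Rdiv_lt_0_compat; first lra. apply: lt_0_INR; apply/ltP; done.
have hpos : (0 < #|S j|)%N.
  move: hle; case: #|S j| => //; rewrite muln0 leqn0 => /eqP e; by rewrite e in hD.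
have h1 : 0 < INR #|S j| by apply: lt_0_INR; apply/ltP.
have h2 : INR D <= 3 * INR #|S j|.
  have := le_INR _ _ (elimT leP hle); rewrite mult_INR /=; lra.
have h3 : 0 < INR D by apply: lt_0_INR; apply/ltP.
apply: (Rmult_le_reg_l (INR #|S j|)) => //.
rewrite Rinv_r; last lra.
apply: (Rmult_le_reg_l (INR D)) => //.
have -> : INR D * (INR #|S j| * (3 / INR D)) = 3 * INR #|S j| by field; lra.
lra.
Qed.

Lemma per_i D k r (S : Omega D k) (i : 'I_D) : (2 <= r)%N -> (r <= k)%N -> (0 < D)%N -> goodS r S ->
  \big[Rplus/0]_(j0 : 'I_k | (j0 < r)%N)
     (Amul S (qv k r j0) i * Amul S (qv k r j0) i * / Amul S (xv k r) i)
  <= INR r / ((INR r - 1) * (INR r - 1)) * ((INR r - 2) * ssum r S i + 3 / INR D).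
Proof.
move=> h2 hrk hD hg.
have hr : 2 <= INR r by have := le_INR _ _ (elimT leP h2); rewrite /=; lra.
have hDp : 0 < INR D by apply: lt_0_INR; apply/ltP.
have s0 := ssum_ge0 r S i.
set s := ssum r S i in s0 *.
set rr := INR r in hr *.
have hrhs : 0 <= rr / ((rr - 1) * (rr - 1)) * ((rr - 2) * s + 3 / INR D).
  apply: Rmult_le_pos.
    apply: Rmult_le_pos; first lra. apply: Rlt_le; apply: Rinv_0_lt_compat; nra.
  apply: Rplus_le_le_0_compat; first nra. apply: Rlt_le; apply: Rdiv_lt_0_compat; lra.
destruct (Req_dec s 0) as [e|ne].
  rewrite big1 // => j0 _; rewrite p_eq -/s e Rmult_0_l Rinv_0; ring.
have sp : 0 < s by lra.
set c := rr / ((rr - 1) * (rr - 1) * s).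
have e : forall j0 : 'I_k, (j0 < r)%N ->
   Amul S (qv k r j0) i * Amul S (qv k r j0) i * / Amul S (xv k r) i
   = c * s * s + (-2 * c * s) * Amat S i j0 + c * (Amat S i j0 * Amat S i j0).
  move=> j0 hj0; rewrite q_eq p_eq -/s.
  have := s_split S i hj0; rewrite -/s => es.
  have -> : tsum r S j0 i = s - Amat S i j0 by lra.
  rewrite /c /rr in hr *; move: (Amat S i j0) (INR r) hr => a x hx; clear -ne hx; move: s ne => s ne.
  field; split; lra.
rewrite (eq_bigr _ e) !big_split /= sum_lt // -!big_distrr /=.
have -> : \big[Rplus/0]_(j : 'I_k | (j < r)%N) Amat S i j = s by [].
have ha : \big[Rplus/0]_(j : 'I_k | (j < r)%N) (Amat S i j * Amat S i j)
          <= 3 / INR D * s.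
  rewrite /s /ssum big_distrr /=; apply: sumR_leP => j hj.
  have := Amat_le i hD hg hj; have := Amat_ge0 S i j; nra.
have hc : 0 < c.
  rewrite /c; apply: Rdiv_lt_0_compat; first lra.
  apply: Rmult_lt_0_compat; nra.
have hcs : c * s = rr / ((rr - 1) * (rr - 1)) by rewrite /c; field; split; lra.
apply: Rle_trans (_ : rr * (c * s * s) + -2 * c * s * s + c * (3 / INR D * s) <= _).
  rewrite -/rr; apply: Rplus_le_compat_l; apply: Rmult_le_compat_l; [lra | exact: ha].
have -> : rr * (c * s * s) + -2 * c * s * s + c * (3 / INR D * s)
   = (c * s) * ((rr - 2) * s + 3 / INR D) by ring.
rewrite hcs; lra.
Qed.

Definition Rleb (a b : R) : bool := if Rle_dec a b then true else false.

Lemma exists_j0 D k r (S : Omega D k) : (2 <= r)%N -> (r <= k)%N -> (0 < D)%N -> goodS r S ->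
  exists j0 : 'I_k, (j0 < r)%N && Rleb (gval r S j0) (1 + 3 / ((INR r - 1) * (INR r - 1))).
Proof.
move=> h2 hrk hD hg.
have hr : 2 <= INR r by have := le_INR _ _ (elimT leP h2); rewrite /=; lra.
have hDp : 0 < INR D by apply: lt_0_INR; apply/ltP.
case: (pickP (fun j0 : 'I_k => (j0 < r)%N && Rleb (gval r S j0) (1 + 3 / ((INR r - 1) * (INR r - 1))))) => [j0 h|none].
  by exists j0.
exfalso.
set B := 1 + 3 / ((INR r - 1) * (INR r - 1)).
have low : INR r * B <= \big[Rplus/0]_(j0 : 'I_k | (j0 < r)%N) gval r S j0.
  rewrite -(@sum_lt k r B hrk); apply: sumR_leP => j0 hj0.
  have := none j0; rewrite hj0 /= /Rleb; case: Rle_dec => // hn _; apply: Rlt_le; exact: Rnot_le_lt.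
have up : \big[Rplus/0]_(j0 : 'I_k | (j0 < r)%N) gval r S j0 <=
     INR r / ((INR r - 1) * (INR r - 1)) * ((INR r - 2) * INR r + INR D * (3 / INR D)).
  rewrite /gval exchange_big /=.
  apply: Rle_trans; first (apply: sumR_le => i; exact: per_i).
  rewrite -big_distrr /= big_split /= -big_distrr /= sum_ssum // sum_constR card_ord.
  lra.
have : INR r * B <= INR r / ((INR r - 1) * (INR r - 1)) * ((INR r - 2) * INR r + INR D * (3 / INR D)) by lra.
rewrite /B.
have -> : INR D * (3 / INR D) = 3 by field; lra.
set rr := INR r in hr *.
have hq : 0 < (rr - 1) * (rr - 1) by nra.
move=> hh.
have : rr * ((rr - 1) * (rr - 1) + 3) <= rr * ((rr - 2) * rr + 3).
  have e1 : rr * (1 + 3 / ((rr - 1) * (rr - 1))) * ((rr - 1) * (rr - 1)) = rr * ((rr - 1) * (rr - 1) + 3) by field; lra.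
  have e2 : rr / ((rr - 1) * (rr - 1)) * ((rr - 2) * rr + 3) * ((rr - 1) * (rr - 1)) = rr * ((rr - 2) * rr + 3) by field; lra.
  rewrite -e1 -e2; apply: Rmult_le_compat_r; lra.
nra.
Qed.








Lemma sum_constT (I : finType) c : \big[Rplus/0]_(i : I) c = INR #|I| * c.
Proof. by rewrite big_const iter_plusR. Qed.

Definition sg D (A : {set 'I_D}) (i : 'I_D) : R := if i \in A then 1 else -1.

Lemma sum_sg D (A : {set 'I_D}) : \big[Rplus/0]_(i : 'I_D) sg A i = 2 * INR #|A| - INR D.
Proof.
have -> : \big[Rplus/0]_(i : 'I_D) sg A i = \big[Rplus/0]_(i : 'I_D) (2 * (if i \in A then 1 else 0) + -1).
  by apply: eq_bigr => i _; rewrite /sg; case: ifP => _; lra.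
rewrite big_split /= -big_distrr /= -big_mkcond /= !sum_constR card_ord.
have -> : #|[pred i | i \in A]| = #|A| by apply: eq_card.
lra.
Qed.

Definition tog D (i : 'I_D) (A : {set 'I_D}) : {set 'I_D} :=
  if i \in A then A :\ i else i |: A.

Lemma togK D (i : 'I_D) : involutive (tog i).
Proof.
move=> A; rewrite {2}/tog; case hA: (i \in A).
  by rewrite /tog in_setD1 eqxx /= setD1K.
by rewrite /tog in_setU1 eqxx /= setU1K // hA.
Qed.

Lemma sg_tog D (i i' : 'I_D) A : i' != i -> sg (tog i A) i' = sg A i'.
Proof. by move=> h; rewrite /sg /tog; case: (i \in A); rewrite ?in_setD1 ?in_setU1 (negbTE h). Qed.
Lemma sg_tog_self D (i : 'I_D) A : sg (tog i A) i = - sg A i.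
Proof. rewrite /sg /tog; case h: (i \in A); rewrite ?in_setD1 ?in_setU1 eqxx /= ?h; lra. Qed.

Lemma cross0 D (i i' : 'I_D) : i' != i ->
  \big[Rplus/0]_(A : {set 'I_D}) (sg A i * sg A i') = 0.
Proof.
move=> h.
have e2 : \big[Rplus/0]_(A : {set 'I_D}) (sg (tog i A) i * sg (tog i A) i') =
  -1 * \big[Rplus/0]_(A : {set 'I_D}) (sg A i * sg A i').
  rewrite big_distrr /=; apply: eq_bigr => A _; rewrite sg_tog_self sg_tog //; lra.
have e3 : \big[Rplus/0]_(A : {set 'I_D}) (sg A i * sg A i') =
  -1 * \big[Rplus/0]_(A : {set 'I_D}) (sg A i * sg A i').
  by rewrite -e2 {1}(reindex_inj (can_inj (togK i))).
lra.
Qed.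

Lemma second_moment D :
  \big[Rplus/0]_(A : {set 'I_D}) ((2 * INR #|A| - INR D) * (2 * INR #|A| - INR D))
  = INR D * INR #|{set 'I_D}|.
Proof.
have e : forall A : {set 'I_D}, (2 * INR #|A| - INR D) * (2 * INR #|A| - INR D)
   = \big[Rplus/0]_(i : 'I_D) \big[Rplus/0]_(i' : 'I_D) (sg A i * sg A i').
  move=> A; rewrite -sum_sg big_distrl /=; apply: eq_bigr => i _.
  by rewrite big_distrr.
rewrite (eq_bigr _ (fun A _ => e A)) exchange_big /=.
rewrite (eq_bigr (fun _ => INR #|{set 'I_D}|)).
  by rewrite sum_constT card_ord; lra.
move=> i _; rewrite exchange_big /= (bigD1 i) //=.
rewrite [X in _ + X]big1; last by move=> i' hi'; apply: cross0.
rewrite (eq_bigr (fun _ => 1)); first by rewrite sum_constT Rmult_1_r Rplus_0_r.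
by move=> A _; rewrite /sg; case: ifP => _; lra.
Qed.

Lemma small_bound D :
  INR #|[set A : {set 'I_D} | (3 * #|A| < D)%N]| * INR D <= 9 * INR #|{set 'I_D}|.
Proof.
set sm := [set A : {set 'I_D} | (3 * #|A| < D)%N].
case: (posnP D) => [hD0|hD].
  have -> : INR D = 0 by rewrite hD0.
  rewrite Rmult_0_r; apply: Rmult_le_pos; [lra | apply: pos_INR].
have hDp : 0 < INR D by apply: lt_0_INR; apply/ltP.
have low : INR #|sm| * (INR D * INR D / 9) <=
  \big[Rplus/0]_(A : {set 'I_D}) ((2 * INR #|A| - INR D) * (2 * INR #|A| - INR D)).
  have -> : INR #|sm| * (INR D * INR D / 9) = \big[Rplus/0]_(A | A \in sm) (INR D * INR D / 9).
    by rewrite sum_constR; congr (INR _ * _); apply: eq_card.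
  rewrite big_mkcond /=.
  apply: sumR_le => A; case: ifP => hA; last first.
    by have := Rle_0_sqr (2 * INR #|A| - INR D); rewrite /Rsqr.
  move: hA; rewrite inE => hA.
  have h3 : 3 * INR #|A| + 1 <= INR D.
    have := le_INR _ _ (elimT leP hA); rewrite S_INR mult_INR /=; lra.
  have h4 : INR D / 3 <= INR D - 2 * INR #|A| by have := pos_INR #|A|; lra.
  have h5 : 0 <= INR D / 3 by lra.
  have := Rmult_le_compat _ _ _ _ h5 h5 h4 h4.
  have -> : (2 * INR #|A| - INR D) * (2 * INR #|A| - INR D) = (INR D - 2 * INR #|A|) * (INR D - 2 * INR #|A|) by ring.
  lra.
rewrite second_moment in low.
have : INR #|sm| * INR D * INR D <= 9 * INR #|{set 'I_D}| * INR D by lra.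
move=> h; apply: (Rmult_le_reg_r (INR D)) => //; lra.
Qed.

Definition goodset D k r : {set Omega D k} := [set S | goodS r S].
Definition badset D k (j : 'I_k) : {set Omega D k} := [set S : Omega D k | (3 * #|S j| < D)%N].
Definition smallset D : {set {set 'I_D}} := [set A : {set 'I_D} | (3 * #|A| < D)%N].

Lemma card_Omega D k :
  INR #|[set: Omega D k]| = \big[Rmult/1]_(x : 'I_k) INR #|{set 'I_D}|.
Proof.
rewrite cardsT -[LHS]Rmult_1_r -sum_constT.
rewrite (eq_bigr (fun S : Omega D k => \big[Rmult/1]_(x : 'I_k) 1)); last by move=> S _; rewrite big1.
rewrite -(bigA_distr_bigA (fun (_ : 'I_k) (_ : {set 'I_D}) => 1)) /=.
apply: eq_bigr => x _; rewrite sum_constT Rmult_1_r; congr INR; exact: eq_card.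
Qed.

Lemma card_bad D k (j : 'I_k) :
  INR #|badset D j| = \big[Rmult/1]_(x : 'I_k) (if x == j then INR #|smallset D| else INR #|{set 'I_D}|).
Proof.
pose F := fun (x : 'I_k) (A : {set 'I_D}) => if x == j then (if (3 * #|A| < D)%N then 1 else 0) else 1.
have -> : INR #|badset D j| = \big[Rplus/0]_(S : Omega D k) \big[Rmult/1]_(x : 'I_k) F x (S x).
  rewrite -[LHS]Rmult_1_r.
  have -> : INR #|badset D j| * 1 = \big[Rplus/0]_(S | S \in badset D j) 1.
    by rewrite sum_constR; congr (INR _ * _); apply: eq_card.
  rewrite big_mkcond /=; apply: eq_bigr => S _.
  rewrite (bigD1 j) //= big1; last by move=> x /negbTE hx; rewrite /F hx.
  by rewrite /F eqxx /badset inE; case: ifP => _; lra.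
rewrite -(bigA_distr_bigA F) /=; apply: eq_bigr => x _.
rewrite /F; case: (x == j).
  rewrite -big_mkcond /= sum_constR Rmult_1_r; congr INR; apply: eq_card => A.
  by rewrite /smallset inE.
rewrite sum_constT Rmult_1_r; congr INR; exact: eq_card.
Qed.

Lemma bad_ratio D k (j : 'I_k) :
  INR #|badset D j| * INR #|{set 'I_D}| = INR #|smallset D| * INR #|[set: Omega D k]|.
Proof.
rewrite card_bad card_Omega.
rewrite (bigD1 j) //. rewrite [in RHS](bigD1 j) //. rewrite eqxx.
rewrite /= (eq_bigr (fun _ => INR #|{set 'I_D}|)); last by move=> x hx; rewrite (negbTE hx).
move: (\big[Rmult/1]_(i | true && (i != j)) INR #|{set 'I_D}|) => P.
move: (INR #|{set 'I_D}|) (INR #|smallset D|) => a b. ring.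
Qed.

Lemma c_pos D : 0 < INR #|{set 'I_D}|.
Proof. apply: lt_0_INR; apply/ltP; apply/card_gt0P; by exists set0. Qed.

Lemma Omega_pos D k : 0 < INR #|[set: Omega D k]|.
Proof.
rewrite card_Omega; apply: (big_ind (fun x => 0 < x)); [lra | move=> *; nra | move=> *; exact: c_pos].
Qed.

Lemma bad_union D k r :
  INR #|~: goodset D k r| <= \big[Rplus/0]_(j : 'I_k | (j < r)%N) INR #|badset D j|.
Proof.
have e : forall (T : finType) (A : {set T}), INR #|A| = \big[Rplus/0]_(x : T) (if x \in A then 1 else 0).
  move=> T A; rewrite -big_mkcond /= sum_constR Rmult_1_r; congr INR; by apply: eq_card.
rewrite e.
rewrite (eq_bigr (fun j => \big[Rplus/0]_(S : Omega D k) (if S \in badset D j then 1 else 0))); last by move=> j _; rewrite e.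
rewrite exchange_big /=; apply: sumR_le => S.
case: ifP => hS; last by apply: sumR_ge0 => j; case: ifP => _; lra.
move: hS; rewrite inE /goodset inE /goodS => /forallPn [j].
rewrite negb_imply => /andP [hj hb].
rewrite (bigD1 j) //=.
have -> : (S \in badset D j) = true by rewrite /badset inE ltnNge hb.
have h0 : 0 <= \big[Rplus/0]_(j0 : 'I_k | (j0 < r)%N && (j0 != j)) (if S \in badset D j0 then 1 else 0).
  by apply: sumR_ge0 => j0; case: ifP => _; lra.
have := Rplus_le_compat_l 1 _ _ h0; rewrite Rplus_0_r; exact.
Qed.

Lemma prob_good D k r : (r <= k)%N -> (0 < D)%N ->
  1 - 9 * INR r / INR D <= prob (goodset D k r).
Proof.
move=> hrk hD.
have hDp : 0 < INR D by apply: lt_0_INR; apply/ltP.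
have hO := Omega_pos D k.
have hc := c_pos D.
have hsum := cardsC (goodset D k r).
have hsum' : INR #|goodset D k r| = INR #|[set: Omega D k]| - INR #|~: goodset D k r|.
  rewrite cardsT -hsum plus_INR; lra.
have hu := bad_union D k r.
have hb : forall j : 'I_k, INR #|badset D j| = INR #|smallset D| * INR #|[set: Omega D k]| / INR #|{set 'I_D}|.
  move=> j; rewrite -(bad_ratio D j); field; lra.
rewrite (eq_bigr _ (fun j _ => hb j)) sum_lt // in hu.
have hs := small_bound D.
rewrite /prob hsum'.
have hs' : INR #|smallset D| / INR #|{set 'I_D}| <= 9 / INR D.
  apply: (Rmult_le_reg_r (INR #|{set 'I_D}| * INR D)); first nra.
  have -> : INR #|smallset D| / INR #|{set 'I_D}| * (INR #|{set 'I_D}| * INR D) = INR #|smallset D| * INR D by field; lra.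
  have -> : 9 / INR D * (INR #|{set 'I_D}| * INR D) = 9 * INR #|{set 'I_D}| by field; lra.
  exact: hs.
have : INR #|~: goodset D k r| / INR #|[set: Omega D k]| <= INR r * (9 / INR D).
  apply: (Rmult_le_reg_r (INR #|[set: Omega D k]|)) => //.
  have -> : INR #|~: goodset D k r| / INR #|[set: Omega D k]| * INR #|[set: Omega D k]| = INR #|~: goodset D k r| by field; lra.
  apply: Rle_trans hu _.
  have -> : INR r * (INR #|smallset D| * INR #|[set: Omega D k]| / INR #|{set 'I_D}|) =
     INR r * (INR #|smallset D| / INR #|{set 'I_D}|) * INR #|[set: Omega D k]| by field; lra.
  apply: Rmult_le_compat_r; first lra.
  apply: Rmult_le_compat_l; [exact: pos_INR | exact: hs'].
have -> : (INR #|[set: Omega D k]| - INR #|~: goodset D k r|) / INR #|[set: Omega D k]|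
  = 1 - INR #|~: goodset D k r| / INR #|[set: Omega D k]| by field; lra.
have -> : 9 * INR r / INR D = INR r * (9 / INR D) by field; lra.
lra.
Qed.

Lemma ln_le_self a : 0 <= a -> ln (1 + a) <= a.
Proof.
move=> ha.
have h := exp_ineq1_le a.
case: (Rle_lt_or_eq_dec _ _ h) => h'.
  have := ln_increasing (1 + a) (exp a) ltac:(lra) h'; rewrite ln_exp; lra.
rewrite h' ln_exp; lra.
Qed.

Lemma pow_small a c m : 0 <= a -> 0 < c -> INR m * a < ln (1 + c) -> (1 + a) ^ m < 1 + c.
Proof.
move=> ha hc h.
apply: ln_lt_inv; [apply: pow_lt; lra | lra |].
rewrite ln_pow; last lra.
have := ln_le_self ha; have := pos_INR m => hm h1.
apply: Rle_lt_trans h; apply: Rmult_le_compat_l => //.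
Qed.

Lemma ln_pos c : 0 < c -> 0 < ln (1 + c).
Proof. move=> hc; rewrite -ln_1; apply: ln_increasing; lra. Qed.

Lemma card_le_r k r (A : {set 'I_k}) : (r <= k)%N ->
  (forall j : 'I_k, j \in A -> (j < r)%N) -> (#|A| <= r)%N.
Proof.
move=> hrk h; apply/leP; apply: INR_le.
have e : forall (T : finType) (B : {set T}), INR #|B| = \big[Rplus/0]_(x : T) (if x \in B then 1 else 0).
  move=> T B; rewrite -big_mkcond /= sum_constR Rmult_1_r; congr INR; by apply: eq_card.
rewrite e.
apply: Rle_trans (_ : _ <= \big[Rplus/0]_(j : 'I_k) (if (j < r)%N then 1 else 0)) _.
  apply: sumR_le => j; case: ifP => hj; first by rewrite (h j hj); lra.
  case: ifP => _; lra.
rewrite -big_mkcond /= sum_lt //; lra.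
Qed.

Lemma in_supp k (x : 'I_k -> R) j : (j \in supp x) = (if Req_EM_T (x j) 0 then false else true).
Proof. by rewrite /supp inE. Qed.

Lemma xv_simplex k r : (1 <= r)%N -> (r <= k)%N -> in_simplex (xv k r).
Proof.
move=> h1 hrk; split.
  move=> j; rewrite /xv; case: ifP => _; [exact: inv_INR_ge0 | lra].
have hr : 1 <= INR r by have := le_INR _ _ (elimT leP h1); rewrite /=; lra.
rewrite /xv -big_mkcond /= sum_lt //; field; lra.
Qed.

Lemma qv_simplex k r (j0 : 'I_k) : (2 <= r)%N -> (r <= k)%N -> (j0 < r)%N -> in_simplex (qv k r j0).
Proof.
move=> h2 hrk hj0.
have hr : 2 <= INR r by have := le_INR _ _ (elimT leP h2); rewrite /=; lra.
split.
  move=> j; rewrite /qv; case: ifP => _; last lra.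
  apply: Rlt_le; apply: Rinv_0_lt_compat; lra.
rewrite /qv -big_mkcond /=.
have := @sum_lt k r (/ (INR r - 1)) hrk; rewrite (bigD1 j0) //= => e.
have : INR r * / (INR r - 1) = / (INR r - 1) + (INR r - 1) * / (INR r - 1) by field; lra.
have -> : (INR r - 1) * / (INR r - 1) = 1 by field; lra.
move=> h; apply: (Rplus_eq_reg_l (/ (INR r - 1))); rewrite -h; exact: e.
Qed.

Lemma xv_sparse k r : (1 <= r)%N -> (r <= k)%N -> r_sparse r (xv k r).
Proof.
move=> h1 hrk; split.
  apply: (@card_le_r k r) => // j; rewrite in_supp /xv; case hj: (j < r)%N => //; by case: Req_EM_T.
move=> j; rewrite /xv; case: ifP => _; lra.
Qed.

Lemma qv_sparse k r (j0 : 'I_k) : (2 <= r)%N -> (r <= k)%N -> r_sparse r (qv k r j0).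
Proof.
move=> h2 hrk.
have hr : 2 <= INR r by have := le_INR _ _ (elimT leP h2); rewrite /=; lra.
split.
  apply: (@card_le_r k r) => // j; rewrite in_supp /qv; case hj: (j < r)%N => //; by case: Req_EM_T.
move=> j; rewrite /qv; case: ifP => _; last lra.
move=> _; apply: Rinv_le_contravar; lra.
Qed.

Lemma supp_diff k r (j0 : 'I_k) : (2 <= r)%N -> (j0 < r)%N -> supp (xv k r) <> supp (qv k r j0).
Proof.
move=> h2 hj0 e.
have hr : 2 <= INR r by have := le_INR _ _ (elimT leP h2); rewrite /=; lra.
have : j0 \in supp (xv k r).
  rewrite in_supp /xv hj0; case: Req_EM_T => // h.
  have : 0 < / INR r by apply: Rinv_0_lt_compat; lra.
  lra.
rewrite e in_supp /qv eqxx andbF; by case: Req_EM_T.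
Qed.

Definition Bnd (r : nat) : R := 1 + 3 / ((INR r - 1) * (INR r - 1)).
Definition jsel D k r (S : Omega D k) : option 'I_k :=
  [pick j0 : 'I_k | (j0 < r)%N && Rleb (gval r S j0) (Bnd r)].
Definition xmv D k r (S : Omega D k) : 'I_k -> R :=
  match jsel r S with Some j0 => qv k r j0 | None => xv k r end.

Lemma jsel_spec D k r (S : Omega D k) : (2 <= r)%N -> (r <= k)%N -> (0 < D)%N -> goodS r S ->
  exists j0, jsel r S = Some j0 /\ (j0 < r)%N /\ gval r S j0 <= Bnd r.
Proof.
move=> h2 hrk hD hg.
have [j1 hj1] := exists_j0 h2 hrk hD hg.
rewrite /jsel; case: pickP => [j0 /andP [hj0 hb] | none]; last by have := none j1; rewrite hj1.
exists j0; split => //; split => //; move: hb; rewrite /Rleb; by case: Rle_dec.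
Qed.

Lemma tv_main D k r m (S : Omega D k) (j0 : 'I_k) eps :
  (2 <= r)%N -> (r <= k)%N -> (0 < D)%N -> goodS r S -> (j0 < r)%N -> gval r S j0 <= Bnd r ->
  0 < eps -> INR m * (12 / (INR r * INR r)) < ln (1 + 4 * (eps * eps)) ->
  tv_iid m (Amul S (xv k r)) (Amul S (qv k r j0)) < eps.
Proof.
move=> h2 hrk hD hg hj0 hgB he hm.
have hr : 2 <= INR r by have := le_INR _ _ (elimT leP h2); rewrite /=; lra.
have hr0 : 0 < INR r by lra.
have hp0 : forall i, 0 <= Amul S (xv k r) i.
  move=> i; rewrite p_eq; apply: Rmult_le_pos; [exact: ssum_ge0 | exact: inv_INR_ge0].
have hq0 : forall i, 0 <= Amul S (qv k r j0) i.
  move=> i; rewrite q_eq; apply: Rmult_le_pos; first exact: tsum_ge0.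
  apply: Rlt_le; apply: Rinv_0_lt_compat; lra.
have hsp : \big[Rplus/0]_(i : 'I_D) Amul S (xv k r) i = 1.
  rewrite (eq_bigr _ (fun i _ => p_eq r S i)) -big_distrl /= sum_ssum //; field; lra.
have hsq : \big[Rplus/0]_(i : 'I_D) Amul S (qv k r j0) i = 1.
  rewrite (eq_bigr _ (fun i _ => q_eq r S j0 i)) -big_distrl /= sum_tsum //; field; lra.
have hpq : forall i, Amul S (xv k r) i = 0 -> Amul S (qv k r j0) i = 0.
  move=> i; rewrite p_eq q_eq => h.
  have hs : ssum r S i = 0.
    have := ssum_ge0 r S i; have : 0 < / INR r by apply: Rinv_0_lt_compat.
    move=> h1 h3; case: (Rle_lt_or_eq_dec _ _ h3) => // h4; nra.
  have := s_split S i hj0; have := Amat_ge0 S i j0; have := tsum_ge0 r S j0 i.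
  move=> h5 h6 h7; have -> : tsum r S j0 i = 0 by lra.
  lra.
have hl : 0 < 2 * eps by lra.
have := tv_bound m hp0 hq0 hsp hsq hpq hl.
rewrite -/(gval r S j0).
set g := gval r S j0 in hgB *.
have hg0 : 0 <= g.
  rewrite /g /gval; apply: sumR_ge0 => i; apply: Rmult_le_pos; first nra.
  have := hp0 i => h; case: (Rle_lt_or_eq_dec _ _ h) => h'.
    apply: Rlt_le; exact: Rinv_0_lt_compat.
  rewrite -h' Rinv_0; lra.
have hB : Bnd r <= 1 + 12 / (INR r * INR r).
  rewrite /Bnd; apply: Rplus_le_compat_l.
  have h1 : 0 < (INR r - 1) * (INR r - 1) by nra.
  have h3 : INR r * INR r <= 4 * ((INR r - 1) * (INR r - 1)) by nra.
  apply: (Rmult_le_reg_r ((INR r - 1) * (INR r - 1) * (INR r * INR r))); first nra.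
  have -> : 3 / ((INR r - 1) * (INR r - 1)) * ((INR r - 1) * (INR r - 1) * (INR r * INR r)) = 3 * (INR r * INR r) by field; lra.
  have -> : 12 / (INR r * INR r) * ((INR r - 1) * (INR r - 1) * (INR r * INR r)) = 12 * ((INR r - 1) * (INR r - 1)) by field; lra.
  lra.
have ha : 0 <= 12 / (INR r * INR r) by apply: Rlt_le; apply: Rdiv_lt_0_compat; nra.
have hpow : g ^ m < 1 + 4 * (eps * eps).
  apply: Rle_lt_trans (_ : _ <= (1 + 12 / (INR r * INR r)) ^ m) _.
    apply: pow_incr; lra.
  apply: pow_small => //; nra.
move=> htv; apply: Rle_lt_trans htv _.
have -> : / 2 * ((g ^ m - 1) / (2 * (2 * eps)) + 2 * eps / 2) = (g ^ m - 1) / (8 * eps) + eps / 2 by field; lra.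
have : (g ^ m - 1) / (8 * eps) < eps / 2.
  apply: (Rmult_lt_reg_r (8 * eps)); first lra.
  have -> : (g ^ m - 1) / (8 * eps) * (8 * eps) = g ^ m - 1 by field; lra.
  nra.
lra.
Qed.

Lemma prob_le1 D k (G : {set Omega D k}) : prob G <= 1.
Proof.
rewrite /prob.
have hO := Omega_pos D k.
have := cardsC G; rewrite -cardsT => e.
have : INR #|G| <= INR #|[set: Omega D k]|.
  apply: le_INR; apply/leP; rewrite -e; exact: leq_addr.
move=> h; apply: (Rmult_le_reg_r (INR #|[set: Omega D k]|)) => //.
have -> : INR #|G| / INR #|[set: Omega D k]| * INR #|[set: Omega D k]| = INR #|G| by field; lra.
lra.
Qed.

Theorem lemma6p3 (r k D : nat -> nat)
  (hrk : forall n, (r n <= k n)%N)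
  (hr : cv_infty (fun n => INR (r n)))
  (hD : cv_infty (fun n => INR (D n) / (INR (r n) ^ 2)))
  (hk : Un_cv (fun n => ln (INR (k n)) / INR (D n)) 0) :
  exists (G : forall n, {set Omega (D n) (k n)})
         (x xm : forall n, Omega (D n) (k n) -> 'I_(k n) -> R),
    Un_cv (fun n => prob (G n)) 1 /\
    (forall n (S : Omega (D n) (k n)), S \in G n ->
       in_simplex (x n S) /\ in_simplex (xm n S) /\
       r_sparse (r n) (x n S) /\ r_sparse (r n) (xm n S) /\
       supp (x n S) <> supp (xm n S)) /\
    (forall m : nat -> nat,
       Un_cv (fun n => INR (m n) / (INR (r n) ^ 2)) 0 ->
       forall eps, eps > 0 -> exists N, forall n, (N <= n)%N ->
         forall S : Omega (D n) (k n), S \in G n ->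
           tv_iid (m n) (Amul S (x n S)) (Amul S (xm n S)) < eps).
Proof.
exists (fun n => if (2 <= r n)%N && (0 < D n)%N then goodset (D n) (k n) (r n) else set0).
exists (fun n S => xv (k n) (r n)).
exists (fun n S => xmv (r n) S).
split; [|split].
- move=> eps heps.
  have [N1 HN1] := hr (2 + 9 / eps).
  have [N2 HN2] := hD 1.
  exists (maxn N1 N2) => n hn.
  move/leP: hn; rewrite geq_max => /andP [/leP h1 /leP h2].
  have hrn := HN1 n h1; have hDn := HN2 n h2.
  have h9 : 0 < 9 / eps by apply: Rdiv_lt_0_compat; lra.
  have hr2 : (2 <= r n)%N.
    apply/leP; apply: INR_lt; rewrite /=; lra.
  have hrp : 0 < INR (r n) by lra.
  have hr2' : 0 < INR (r n) ^ 2 by apply: pow_lt.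
  have hDgt : INR (r n) ^ 2 < INR (D n).
    apply: (Rmult_lt_reg_r (/ (INR (r n) ^ 2))); first by apply: Rinv_0_lt_compat.
    rewrite Rinv_r; last lra. exact: hDn.
  have hD0 : (0 < D n)%N by apply/leP; apply: INR_lt; rewrite /=; lra.
  rewrite hr2 hD0 /=.
  have hp := prob_good (hrk n) hD0.
  have hp1 := prob_le1 (goodset (D n) (k n) (r n)).
  rewrite /R_dist Rabs_left1; last lra.
  have : 9 * INR (r n) / INR (D n) < eps.
    have hDp : 0 < INR (D n) by lra.
    apply: (Rmult_lt_reg_r (INR (D n))) => //.
    have -> : 9 * INR (r n) / INR (D n) * INR (D n) = 9 * INR (r n) by field; lra.
    have hre : 9 < eps * INR (r n).
      have : 9 / eps * eps = 9 by field; lra.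
      nra.
    have : INR (r n) ^ 2 = INR (r n) * INR (r n) by ring.
    nra.
  lra.
- move=> n S; case: ifP => [/andP [h2 hD0] | _]; last by rewrite inE.
  rewrite inE => hg.
  have [j0 [hj [hj0 hgb]]] := jsel_spec h2 (hrk n) hD0 hg.
  rewrite /xmv hj.
  have h1 : (1 <= r n)%N by apply: ltnW.
  split; first exact: xv_simplex.
  split; first exact: qv_simplex.
  split; first exact: xv_sparse.
  split; first exact: qv_sparse.
  exact: supp_diff.
- move=> m hm eps heps.
  have hc : 0 < 4 * (eps * eps) by nra.
  have hl := ln_pos hc.
  have [N3 HN3] := hm (ln (1 + 4 * (eps * eps)) / 12) ltac:(lra).
  exists N3 => n hn S.
  case: ifP => [/andP [h2 hD0] | _]; last by rewrite inE.
  rewrite inE => hg.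
  have [j0 [hj [hj0 hgb]]] := jsel_spec h2 (hrk n) hD0 hg.
  rewrite /xmv hj.
  have hr2 : 2 <= INR (r n) by have := le_INR _ _ (elimT leP h2); rewrite /=; lra.
  have := HN3 n (elimT leP hn); rewrite /R_dist Rminus_0_r => ha.
  have hm0 : 0 <= INR (m n) / INR (r n) ^ 2.
    apply: Rmult_le_pos; [exact: pos_INR | apply: Rlt_le; apply: Rinv_0_lt_compat; apply: pow_lt; lra].
  rewrite Rabs_right in ha; last lra.
  apply: tv_main => //.
  have -> : INR (m n) * (12 / (INR (r n) * INR (r n))) = 12 * (INR (m n) / INR (r n) ^ 2) by field; lra.
  lra.
Qed.
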